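(* Let $n_b\ge1$, $\alpha>0$, $l_0>0$, $\gamma\in[0,1)$ and $p_{in},p_{out}\in[0,1]$ satisfy either ($p_{in}>p_{out}$ and $1-p_{in}>p_{out}$) or ($p_{out}>p_{in}$ and $1-p_{out}>p_{in}$). Consider a random network on $2n_b$ nodes split into blocks $\mathcal B_1,\mathcal B_2$ of size $n_b$, with $\mathbf W=\alpha\mathbf A$, where $\mathbf A$ is a symmetric $0/1$ matrix whose entries $A_{ij}$, $i\le j$ (diagonal included), are independent Bernoulli with parameter $p_{in}$ if $v_i,v_j$ are in the same block and $p_{out}$ otherwise. Run the GIP model with $l_{j,0}=h_{j,0}=l_0$ and $l_{j,1}=2\alpha l_0$ for all $v_j$, from the initial state $x_i(0)=l_0$ for $v_i\in\mathcal A_0$ and $0$ otherwise. Consider (i) $\mathcal A_0=\{v_{i_1},v_{i_2},v_{i_3},v_{i_4}\}\subset\mathcal B_1$ and (ii) $\mathcal A_0=\{v_{j_1},v_{j_2},v_{j_3},v_{j_4}\}$ with $v_{j_1},v_{j_2}\in\mathcal B_1$, $v_{j_3},v_{j_4}\in\mathcal B_2$. For each choice, let $\Delta$ be the increase of $\mathbb E[\sum_j(1-\gamma)x_j(1)]$ (expectation over the random network) when $h_{j,1}$ is raised from $h_{j,1}=2\alpha l_0$ to $h_{j,1}=4\alpha l_0$ for all $v_j$. Then $\Delta$ for (i) is strictly larger than $\Delta$ for (ii).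
   Context: The general information propagation (GIP) model on a network with weighted adjacency matrix $\mathbf W=(W_{ij})$, $W_{ij}\ge0$, with lower bounds $\{l_{j,t}\}$ and upper bounds $\{h_{j,t}\}$ ($0\le l_{j,t}\le h_{j,t}$, $l_{j,0}>0$) is the dynamics $x_j(t)=f_{j,t}(\sum_i W_{ij}x_i(t-1))$ for $t>0$, where $f_{j,t}(x)=0$ if $x<l_{j,t}$, $f_{j,t}(x)=x$ if $l_{j,t}\le x<h_{j,t}$, $f_{j,t}(x)=h_{j,t}$ if $x\ge h_{j,t}$, and initial values $x_j(0)\in\{0\}\cup[l_{j,0},h_{j,0}]$. *)

(* Defs.v *)
From HB Require Import structures.
From mathcomp Require Import all_boot all_order all_algebra.
Set Implicit Arguments. Unset Strict Implicit. Unset Printing Implicit Defensive.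
Import Order.TTheory GRing.Theory Num.Theory.
Local Open Scope ring_scope.

Section GIP.
Variable R : realFieldType.

Definition gip_f (l h x : R) : R :=
  if x < l then 0 else if x < h then x else h.

Fixpoint gip (n : nat) (W : 'M[R]_n) (l h : nat -> 'I_n -> R)
    (x0 : 'I_n -> R) (t : nat) : 'I_n -> R :=
  match t with
  | 0 => x0
  | t'.+1 => fun j => gip_f (l t j) (h t j)
                        (\sum_(i < n) W i j * gip W l h x0 t' i)
  end.

Definition inB1 (nb : nat) (i : 'I_(nb + nb)) : bool := (i < nb)%N.

Definition edge_prob (nb : nat) (pin pout : R) (i j : 'I_(nb + nb)) : R :=
  if inB1 i == inB1 j then pin else pout.

Definition symmetricb (n : nat) (A : 'M[bool]_n) : bool :=
  [forall i, forall j, A i j == A j i].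

(* Probability of the symmetric 0/1 matrix A: independent Bernoulli entries
   A_ij for i <= j (diagonal included); non-symmetric matrices have prob 0. *)
Definition sbm_prob (nb : nat) (pin pout : R) (A : 'M[bool]_(nb + nb)) : R :=
  if symmetricb A then
    \prod_(i < nb + nb) \prod_(j < nb + nb | (i <= j)%N)
       (if A i j then edge_prob pin pout i j else 1 - edge_prob pin pout i j)
  else 0.

Definition weight_of (n : nat) (alpha : R) (A : 'M[bool]_n) : 'M[R]_n :=
  \matrix_(i, j) (alpha * (A i j)%:R).

(* bounds: l_{j,0} = h_{j,0} = l0; for t >= 1, l_{j,t} = 2 alpha l0 and
   h_{j,t} = c alpha l0 (only t = 0, 1 matter for x(1)). *)
Definition lowb (n : nat) (alpha l0 : R) : nat -> 'I_n -> R :=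
  fun t _ => if t == 0%N then l0 else 2 * alpha * l0.
Definition upb (n : nat) (alpha l0 c : R) : nat -> 'I_n -> R :=
  fun t _ => if t == 0%N then l0 else c * alpha * l0.

Definition init_state (n : nat) (l0 : R) (A0 : {set 'I_n}) : 'I_n -> R :=
  fun i => if i \in A0 then l0 else 0.

Definition expected_out (nb : nat) (alpha l0 gamma pin pout c : R)
    (A0 : {set 'I_(nb + nb)}) : R :=
  \sum_(A : 'M[bool]_(nb + nb))
     sbm_prob pin pout A *
     \sum_(j < nb + nb)
        (1 - gamma) * gip (weight_of alpha A) (@lowb (nb + nb) alpha l0)
                          (@upb (nb + nb) alpha l0 c) (init_state l0 A0) 1 j.

Definition delta_gain (nb : nat) (alpha l0 gamma pin pout : R)
    (A0 : {set 'I_(nb + nb)}) : R :=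
  expected_out alpha l0 gamma pin pout 4 A0
  - expected_out alpha l0 gamma pin pout 2 A0.

End GIP.

(* Main.v *)
Require Import Defs.
From HB Require Import structures.
From mathcomp Require Import all_boot all_order all_algebra ring lra.
Set Implicit Arguments. Unset Strict Implicit. Unset Printing Implicit Defensive.
Import Order.TTheory GRing.Theory Num.Theory.
Local Open Scope ring_scope.

Section Core.
Variable R : realFieldType.
Variable n : nat.
Variable ep : 'I_n -> 'I_n -> R.

Definition wt (i j : 'I_n) (b : bool) : R := if b then ep i j else 1 - ep i j.

Definition sbmg (A : 'M[bool]_n) : R :=
  if symmetricb A then \prod_(i < n) \prod_(j < n | (i <= j)%N) wt i j (A i j) else 0.

Definition symU (B : 'M[bool]_n) : 'M[bool]_n :=
  \matrix_(i, j) if (i <= j)%N then B i j else B j i.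
Definition lowz (B : 'M[bool]_n) : 'M[bool]_n :=
  \matrix_(i, j) if (i <= j)%N then B i j else false.

Lemma symU_sym B : symmetricb (symU B).
Proof.
apply/forallP => i; apply/forallP => j; rewrite !mxE.
case: leqP => h1; case: leqP => h2 //.
- by have -> : i = j by apply/val_inj/anti_leq; rewrite h1 h2.
- by move: (ltn_trans h1 h2); rewrite ltnn.
Qed.

Lemma symU_lowz A : symmetricb A -> symU (lowz A) = A.
Proof.
move=> /forallP hs; apply/matrixP => i j; rewrite !mxE.
case: (leqP i j) => h //.
rewrite (ltnW h).
by move: (hs j) => /forallP /(_ i) /eqP.
Qed.

Lemma lowz_symU B : lowz (symU B) = lowz B.
Proof. by apply/matrixP => i j; rewrite !mxE; case: leqP. Qed.

Lemma core (T : seq ('I_n * 'I_n)) : uniq T -> all (fun k : 'I_n * 'I_n => (k.1 <= k.2)%N) T ->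
  \sum_(A : 'M[bool]_n) sbmg A * \prod_(k <- T) (A k.1 k.2)%:R
  = \prod_(k <- T) ep k.1 k.2.
Proof.
move=> uT /allP aT.
set Q := fun A : 'M[bool]_n => \prod_(i < n) \prod_(j < n | (i <= j)%N) wt i j (A i j).
set M := fun A : 'M[bool]_n => \prod_(k <- T) (A k.1 k.2)%:R : R.
have -> : \sum_(A : 'M[bool]_n) sbmg A * M A = \sum_(A | symmetricb A) Q A * M A.
  rewrite [RHS]big_mkcond; apply: eq_bigr => A _; rewrite /sbmg.
  by case: ifP => //; rewrite mul0r.
rewrite (reindex_onto symU lowz) /=; last by move=> A; apply: symU_lowz.
have -> : \sum_(j | symmetricb (symU j) && (lowz (symU j) == j)) Q (symU j) * M (symU j)
   = \sum_(B | lowz B == B) Q B * M B.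
  apply: eq_big => [B|B _]; first by rewrite symU_sym lowz_symU.
  congr (_ * _).
    rewrite /Q; apply: eq_bigr => i _; apply: eq_bigr => j hj; by rewrite mxE hj.
  rewrite /M; apply: eq_big_seq => k /aT hk; by rewrite mxE hk.
set v := fun (i j : 'I_n) (b : bool) => if (i <= j)%N then wt i j b else (~~ b)%:R : R.
set Z := fun B : 'M[bool]_n => \prod_(i < n) \prod_(j < n | ~~ (i <= j)%N) (~~ B i j)%:R : R.
have -> : \sum_(B | lowz B == B) Q B * M B
    = \sum_(B : 'M[bool]_n) (\prod_(i < n) \prod_(j < n) v i j (B i j)) * M B.
  rewrite big_mkcond; apply: eq_bigr => B _.
  have -> : \prod_(i < n) \prod_(j < n) v i j (B i j) = Q B * Z B.
    rewrite /Q /Z -big_split /=; apply: eq_bigr => i _.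
    rewrite (bigID (fun j : 'I_n => (i <= j)%N)) /=.
    by congr (_ * _); apply: eq_bigr => j hj; rewrite /v ?hj // (negbTE hj).
  case: eqP => [hB | hB].
    rewrite /Z big1 ?mulr1 // => i _; rewrite big1 // => j hj.
    have := congr1 (fun C : 'M[bool]_n => C i j) hB; rewrite mxE (negbTE hj) => <- //.
  case: (pickP (fun ij : 'I_n * 'I_n => ~~ (ij.1 <= ij.2)%N && B ij.1 ij.2)).
    move=> [i j] /= /andP [hij hb].
    by rewrite /Z (bigD1 i) //= (bigD1 j) //= hb /= !mul0r ?mulr0 ?mul0r.
  move=> H; exfalso; apply: hB; apply/matrixP => i j; rewrite mxE.
  case: leqP => // h; have := H (i, j); rewrite /= -ltnNge h /= => ->.
  done.
have hM : forall B : 'M[bool]_n,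
    M B = \prod_(i < n) \prod_(j < n) (if (i, j) \in T then (B i j)%:R else 1).
  move=> B; rewrite /M big_uniq // big_mkcond [RHS]pair_bigA /=.
  by apply: eq_bigr => [[i j]] _.
set u := fun (k : 'I_n * 'I_n) (b : bool) =>
   v k.1 k.2 b * (if k \in T then b%:R else 1).
have -> : \sum_(B : 'M[bool]_n) (\prod_(i < n) \prod_(j < n) v i j (B i j)) * M B
    = \sum_(B : 'M[bool]_n) \prod_(k : 'I_n * 'I_n) u k (B k.1 k.2).
  apply: eq_bigr => B _; rewrite hM -big_split /=.
  under eq_bigr => i _ do rewrite -big_split.
  by rewrite pair_bigA; apply: eq_bigr => -[i j] _.
rewrite (reindex (fun f : {ffun 'I_n * 'I_n -> bool} => \matrix_(i, j) f (i, j))) /=; last first.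
  apply: onW_bij; exists (fun C : 'M[bool]_n => [ffun k => C k.1 k.2]).
    by move=> f; apply/ffunP => -[i j]; rewrite ffunE mxE.
  by move=> C; apply/matrixP => i j; rewrite mxE ffunE.
have -> : \sum_(f : {ffun 'I_n * 'I_n -> bool})
     \prod_(k : 'I_n * 'I_n) u k ((\matrix_(i, j) f (i, j)) k.1 k.2)
   = \sum_(f : {ffun 'I_n * 'I_n -> bool}) \prod_(k : 'I_n * 'I_n) u k (f k).
  by apply: eq_bigr => f _; apply: eq_bigr => -[i j] _; rewrite mxE.
rewrite -(bigA_distr_bigA u).
rewrite [RHS]big_uniq // [RHS]big_mkcond; apply: eq_bigr => k _.
rewrite big_bool /u /v /wt /=.
case: (leqP k.1 k.2) => hk.
  by case: (k \in T); rewrite ?mulr1 ?mulr0 ?addr0 // addrC subrK.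
have -> : (k \in T) = false.
  by apply/negbTE/negP => /aT; rewrite leqNgt hk.
by rewrite !mulr1 add0r.
Qed.

Definition nrm (k : 'I_n * 'I_n) : 'I_n * 'I_n :=
  if (k.1 <= k.2)%N then k else (k.2, k.1).

Lemma nrm_up k : ((nrm k).1 <= (nrm k).2)%N.
Proof. by rewrite /nrm; case: (leqP k.1 k.2) => //= h; apply: ltnW. Qed.

Lemma Egen (S : seq ('I_n * 'I_n)) : (forall i j, ep i j = ep j i) ->
  uniq (map nrm S) ->
  \sum_(A : 'M[bool]_n) sbmg A * \prod_(k <- S) (A k.1 k.2)%:R
  = \prod_(k <- S) ep k.1 k.2.
Proof.
move=> eps uS.
have -> : \sum_(A : 'M[bool]_n) sbmg A * \prod_(k <- S) (A k.1 k.2)%:R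
   = \sum_(A : 'M[bool]_n) sbmg A * \prod_(k <- map nrm S) (A k.1 k.2)%:R.
  apply: eq_bigr => A _; rewrite /sbmg; case: ifP => hs; last by rewrite !mul0r.
  congr (_ * _); rewrite big_map; apply: eq_bigr => k _; rewrite /nrm.
  case: ifP => // _ /=.
  by move/forallP: hs => /(_ k.1) /forallP /(_ k.2) /eqP ->.
rewrite core //; last by apply/allP => k /mapP [k' _ ->]; apply: nrm_up.
rewrite big_map; apply: eq_bigr => k _; rewrite /nrm; case: ifP => //= _.
Qed.

Lemma nrm_inj (x y j : 'I_n) : nrm (x, j) = nrm (y, j) -> x = y.
Proof.
rewrite /nrm /=; case: leqP => h1; case: leqP => h2; case=> //.
- by move=> -> ->.
- by move=> -> ->.
Qed.

End Core.

Section Col.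
Variable R : realFieldType.
Variable n : nat.
Variable ep : 'I_n -> 'I_n -> R.
Hypothesis eps : forall i j, ep i j = ep j i.

Definition psi (x1 x2 x3 x4 : R) : R :=
  x1*x2*x3 + x1*x2*x4 + x1*x3*x4 + x2*x3*x4 - 2*(x1*x2*x3*x4).

Lemma E3 (x y z j : 'I_n) : uniq [:: x; y; z] ->
  \sum_(A : 'M[bool]_n) sbmg ep A * ((A x j)%:R * (A y j)%:R * (A z j)%:R)
  = ep x j * ep y j * ep z j.
Proof.
move=> u.
have hp : forall A : 'M[bool]_n, (A x j)%:R * (A y j)%:R * (A z j)%:R
   = \prod_(k <- [:: (x, j); (y, j); (z, j)]) (A k.1 k.2)%:R :> R.
  by move=> A; rewrite !big_cons big_nil /= mulr1 !mulrA.
under eq_bigr => A _ do rewrite hp.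
rewrite Egen //; first by rewrite !big_cons big_nil /= mulr1 !mulrA.
move: u => /=; rewrite !inE !negb_or => /and3P [/andP [hxy hxz] hyz _].
have ne : forall a b : 'I_n, a != b -> nrm (a, j) != nrm (b, j).
  by move=> a b hab; apply/eqP => /nrm_inj /eqP; apply/negP.
by rewrite !ne.
Qed.

Lemma E4 (x y z w j : 'I_n) : uniq [:: x; y; z; w] ->
  \sum_(A : 'M[bool]_n) sbmg ep A * ((A x j)%:R * (A y j)%:R * (A z j)%:R * (A w j)%:R)
  = ep x j * ep y j * ep z j * ep w j.
Proof.
move=> u.
have hp : forall A : 'M[bool]_n, (A x j)%:R * (A y j)%:R * (A z j)%:R * (A w j)%:R
   = \prod_(k <- [:: (x, j); (y, j); (z, j); (w, j)]) (A k.1 k.2)%:R :> R.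
  by move=> A; rewrite !big_cons big_nil /= mulr1 !mulrA.
under eq_bigr => A _ do rewrite hp.
rewrite Egen //; first by rewrite !big_cons big_nil /= mulr1 !mulrA.
move: u => /=; rewrite !inE !negb_or => /andP [/and3P [hxy hxz hxw] /andP [/andP [hyz hyw] /andP [hzw _]]].
have ne : forall a b : 'I_n, a != b -> nrm (a, j) != nrm (b, j).
  by move=> a b hab; apply/eqP => /nrm_inj /eqP; apply/negP.
by rewrite !ne.
Qed.

Lemma Ecol (a b c d j : 'I_n) : uniq [:: a; b; c; d] ->
  \sum_(A : 'M[bool]_n) sbmg ep A *
     psi (A a j)%:R (A b j)%:R (A c j)%:R (A d j)%:R
  = psi (ep a j) (ep b j) (ep c j) (ep d j).
Proof.
move=> u.
move: (u) => /=; rewrite !inE !negb_or => /andP [/and3P [hab hac had] /andP [/andP [hbc hbd] /andP [hcd _]]].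
have e : forall A : 'M[bool]_n, sbmg ep A * psi (A a j)%:R (A b j)%:R (A c j)%:R (A d j)%:R
  = sbmg ep A * ((A a j)%:R * (A b j)%:R * (A c j)%:R)
  + sbmg ep A * ((A a j)%:R * (A b j)%:R * (A d j)%:R)
  + sbmg ep A * ((A a j)%:R * (A c j)%:R * (A d j)%:R)
  + sbmg ep A * ((A b j)%:R * (A c j)%:R * (A d j)%:R)
  - 2 * (sbmg ep A * ((A a j)%:R * (A b j)%:R * (A c j)%:R * (A d j)%:R)).
  by move=> A; rewrite /psi; ring.
under eq_bigr => A _ do rewrite e.
rewrite sumrB !big_split /= -mulr_sumr.
rewrite !E3 ?E4 //= ?inE ?negb_or ?hab ?hac ?had ?hbc ?hbd ?hcd //.

Qed.

End Col.

Section Main.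
Variable R : realFieldType.

Lemma gfd (x : R) (k : nat) : 0 < x -> (k <= 4)%N ->
  gip_f (x * 2%:R) (x * 4%:R) (x * k%:R) - gip_f (x * 2%:R) (x * 2%:R) (x * k%:R)
  = x * ((k == 3)%N%:R + 2 * (k == 4)%N%:R).
Proof.
move=> hx hk; rewrite /gip_f !ltr_pM2l // !ltr_nat.
by case: k hk => [|[|[|[|[|k]]]]] //= _; ring.
Qed.

Lemma psi_bits (b1 b2 b3 b4 : bool) :
  ((b1 + b2 + b3 + b4 == 3)%N)%:R + 2 * ((b1 + b2 + b3 + b4 == 4)%N)%:R
  = psi (b1%:R : R) b2%:R b3%:R b4%:R.
Proof. by rewrite /psi; case: b1; case: b2; case: b3; case: b4 => /=; ring. Qed.

Lemma point nb (alpha l0 : R) (A : 'M[bool]_nb) (a b c d j : 'I_nb) :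
  0 < alpha -> 0 < l0 -> uniq [:: a; b; c; d] ->
  gip (weight_of alpha A) (@lowb R nb alpha l0) (@upb R nb alpha l0 4)
      (init_state l0 [set a; b; c; d]) 1 j
  - gip (weight_of alpha A) (@lowb R nb alpha l0) (@upb R nb alpha l0 2)
      (init_state l0 [set a; b; c; d]) 1 j
  = (alpha * l0) * psi (A a j)%:R (A b j)%:R (A c j)%:R (A d j)%:R.
Proof.
move=> ha hl u /=.
set S := [set a; b; c; d].
have hs : \sum_i weight_of alpha A i j * init_state l0 S i
    = (alpha * l0) * ((A a j + A b j + A c j + A d j)%N)%:R.
  transitivity (\sum_(i in S) alpha * (A i j)%:R * l0).
    rewrite [RHS]big_mkcond; apply: eq_bigr => i _; rewrite /init_state mxE.
    by case: ifP; rewrite ?mulr0.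
  rewrite (eq_bigl (fun i => i \in [:: a; b; c; d])) => [|i]; last first. rewrite /S !inE. by rewrite !orbA.
  rewrite -big_uniq // !big_cons big_nil !natrD /= addr0; ring.
rewrite hs /lowb /upb /=.
have -> : 2 * alpha * l0 = alpha * l0 * 2%:R by ring.
have -> : 4 * alpha * l0 = alpha * l0 * 4%:R by ring.
rewrite gfd ?mulr_gt0 //; last by case: (A a j); case: (A b j); case: (A c j); case: (A d j).
by rewrite psi_bits.
Qed.

End Main.

Section Final.
Variable R : realFieldType.

Lemma delta_form nb (alpha l0 gamma pin pout : R) (a b c d : 'I_(nb + nb)) :
  0 < alpha -> 0 < l0 -> uniq [:: a; b; c; d] ->
  delta_gain alpha l0 gamma pin pout [set a; b; c; d]
  = (1 - gamma) * (alpha * l0) *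
    \sum_(j < nb + nb) psi (edge_prob pin pout a j) (edge_prob pin pout b j)
                           (edge_prob pin pout c j) (edge_prob pin pout d j).
Proof.
move=> ha hl u.
rewrite /delta_gain /expected_out -sumrB.
have hpt : forall A : 'M[bool]_(nb + nb),
  sbm_prob pin pout A * (\sum_(j < nb + nb) (1 - gamma) *
     gip (weight_of alpha A) (lowb alpha l0) (upb alpha l0 4) (init_state l0 [set a; b; c; d]) 1 j)
  - sbm_prob pin pout A * (\sum_(j < nb + nb) (1 - gamma) *
     gip (weight_of alpha A) (lowb alpha l0) (upb alpha l0 2) (init_state l0 [set a; b; c; d]) 1 j)
  = (1 - gamma) * (alpha * l0) * \sum_(j < nb + nb) sbm_prob pin pout A *
       psi (A a j)%:R (A b j)%:R (A c j)%:R (A d j)%:R.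
  move=> A; rewrite -mulrBr -sumrB !mulr_sumr; apply: eq_bigr => j _.
  by rewrite -mulrBr point //; ring.
under eq_bigr => A _ do rewrite hpt.
rewrite -mulr_sumr exchange_big /=; congr (_ * _); apply: eq_bigr => j _.
apply: (@Ecol R (nb + nb) (edge_prob pin pout)) => //.
by move=> i k; rewrite /edge_prob eq_sym.
Qed.

Lemma sum_blocks nb (F : bool -> R) :
  \sum_(j < nb + nb) F (inB1 j) = F true *+ nb + F false *+ nb.
Proof.
rewrite big_split_ord /=; congr (_ + _).
  rewrite (eq_bigr (fun _ => F true)) => [|i _]; first by rewrite sumr_const card_ord.
  by rewrite /inB1 /= ltn_ord.
rewrite (eq_bigr (fun _ => F false)) => [|i _]; first by rewrite sumr_const card_ord.
by rewrite /inB1 /= ltnNge leq_addr.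
Qed.

End Final.

Lemma final_alg (R : realFieldType) (K N p q u : R) : 0 < K -> 0 < N -> 0 < u ->
  0 < p + q -> 0 < 2 - p - q -> u * u = (p - q) * (p - q) ->
  0 < K * (psi p p p p * N + psi q q q q * N) - K * (psi p p q q * N + psi q q p p * N).
Proof.
move=> hK hN hu h1 h2 hsq.
have -> : K * (psi p p p p * N + psi q q q q * N) - K * (psi p p q q * N + psi q q p p * N)
   = K * N * (2 * ((p - q) * (p - q)) * (p + q) * (2 - p - q)) by rewrite /psi; ring.
rewrite -hsq; apply: mulr_gt0; first exact: mulr_gt0.
apply: mulr_gt0 => //; apply: mulr_gt0 => //; apply: mulr_gt0; first by rewrite ltr0n.
exact: mulr_gt0.
Qed.

Theorem claim3 (R : realFieldType) (nb : nat) (alpha l0 gamma pin pout : R)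
  (i1 i2 i3 i4 j1 j2 j3 j4 : 'I_(nb + nb)) :
  (1 <= nb)%N -> 0 < alpha -> 0 < l0 -> 0 <= gamma -> gamma < 1 ->
  0 <= pin <= 1 -> 0 <= pout <= 1 ->
  ((pin > pout /\ 1 - pin > pout) \/ (pout > pin /\ 1 - pout > pin)) ->
  uniq [:: i1; i2; i3; i4] ->
  inB1 i1 -> inB1 i2 -> inB1 i3 -> inB1 i4 ->
  uniq [:: j1; j2; j3; j4] ->
  inB1 j1 -> inB1 j2 -> ~~ inB1 j3 -> ~~ inB1 j4 ->
  delta_gain alpha l0 gamma pin pout [set i1; i2; i3; i4]
  > delta_gain alpha l0 gamma pin pout [set j1; j2; j3; j4].
Proof.
move=> hnb ha hl hg0 hg1 /andP [hp0 hp1] /andP [hq0 hq1] hc ui h1 h2 h3 h4 uj k1 k2 k3 k4.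
rewrite !delta_form //.
set p := pin. set q := pout.
have E1 : \sum_(j < nb + nb) psi (edge_prob p q i1 j) (edge_prob p q i2 j)
     (edge_prob p q i3 j) (edge_prob p q i4 j)
   = psi p p p p *+ nb + psi q q q q *+ nb.
  transitivity (\sum_(j < nb + nb)
     (fun b : bool => if b then psi p p p p else psi q q q q) (inB1 j)).
    by apply: eq_bigr => j _; rewrite /edge_prob h1 h2 h3 h4; case: (inB1 j).
  exact: (sum_blocks nb (fun b : bool => if b then psi p p p p else psi q q q q)).
have E2 : \sum_(j < nb + nb) psi (edge_prob p q j1 j) (edge_prob p q j2 j)
     (edge_prob p q j3 j) (edge_prob p q j4 j)
   = psi p p q q *+ nb + psi q q p p *+ nb.
  transitivity (\sum_(j < nb + nb)
     (fun b : bool => if b then psi p p q q else psi q q p p) (inB1 j)).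
    by apply: eq_bigr => j _; rewrite /edge_prob k1 k2 (negbTE k3) (negbTE k4); case: (inB1 j).
  exact: (sum_blocks nb (fun b : bool => if b then psi p p q q else psi q q p p)).
rewrite E1 E2.
rewrite -(mulr_natr (psi p p p p) nb) -(mulr_natr (psi q q q q) nb).
rewrite -(mulr_natr (psi p p q q) nb) -(mulr_natr (psi q q p p) nb) -subr_gt0.
have hK : 0 < (1 - gamma) * (alpha * l0) by rewrite mulr_gt0 ?mulr_gt0 // subr_gt0.
have hN : 0 < (nb%:R : R) by rewrite ltr0n.
rewrite /p /q.
case: hc => [[hpq hs] | [hpq hs]].
  apply: (final_alg hK hN (u := pin - pout)); first by rewrite subr_gt0.
  - lra.
  - lra.
  - done.
apply: (final_alg hK hN (u := pout - pin)); first by rewrite subr_gt0.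
- lra.
- lra.
- by ring.
Qed.
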